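(* Let $T$ be a complete theory with monster model $\mathcal{U}$, $A\subseteq B$ small subsets of $\mathcal{U}$, $\mu\in\mathfrak{M}_x(\mathcal{U})$, $\nu\in\mathfrak{M}_y(\mathcal{U})$. If $\mu\geq_{\mathbb{E},A}\nu$, then $\mu\geq_{\mathbb{E},B}\nu$.
   Context: For $C\subseteq\mathcal{U}$, $\mathcal{L}_x(C)$ is the Boolean algebra of formulas in $x$ with parameters from $C$ modulo $T$, embedded in $\mathcal{L}_{xy}(C)$ via $\varphi(x)\mapsto\varphi(x)\wedge y=y$; $\mathfrak{M}_x(C)$ is the set of finitely additive probability measures on $\mathcal{L}_x(C)$. For $\omega\in\mathfrak{M}_{xy}(C)$, $\pi_x(\omega)(\varphi(x))=\omega(\varphi(x)\wedge y=y)$ (similarly $\pi_y$); $\omega|_D$ is restriction. $\mu\geq_{\mathbb{E},A}\nu$ means there is $\lambda\in\mathfrak{M}_{xy}(A)$ with $\pi_x(\lambda)=\mu|_A$ such that every $\omega\in\mathfrak{M}_{xy}(\mathcal{U})$ with $\omega|_A=\lambda$ and $\pi_x(\omega)=\mu$ satisfies $\pi_y(\omega)=\nu$. *)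

(* Defs.v *)
From Stdlib Require Import Reals List Bool Arith.
Import ListNotations.

Set Implicit Arguments.

(** Function/relation symbols are interpreted on
    lists of elements; only lists of the correct arity are ever used, since
    all formulas considered are well-formed (arity-correct). *)
Record signature : Type := {
  funs : Type; fun_ar : funs -> nat;
  rels : Type; rel_ar : rels -> nat }.

Record structure (L : signature) : Type := {
  dom :> Type;
  dom_inhabited : inhabited dom;
  fun_i : funs L -> list dom -> dom;
  rel_i : rels L -> list dom -> Prop }.

Inductive term (L : signature) (M : Type) : Type :=
| tvar : nat -> term L M
| tpar : M -> term L M
| tapp : funs L -> list (term L M) -> term L M.

Inductive form (L : signature) (M : Type) : Type :=
| frel : rels L -> list (term L M) -> form L M
| feq : term L M -> term L M -> form L M
| fbot : form L M
| fneg : form L M -> form L M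
| fand : form L M -> form L M -> form L M
| for_ : form L M -> form L M -> form L M
| fall : nat -> form L M -> form L M
| fex : nat -> form L M -> form L M.

Arguments tvar {L M}. Arguments tpar {L M}. Arguments tapp {L M}.
Arguments frel {L M}. Arguments feq {L M}. Arguments fbot {L M}.
Arguments fneg {L M}. Arguments fand {L M}. Arguments for_ {L M}.
Arguments fall {L M}. Arguments fex {L M}.

Section Syntax.
Variables (L : signature) (M : Type).

Fixpoint twf (t : term L M) : bool :=
  match t with
  | tapp f ts => (length ts =? fun_ar L f) && forallb twf ts
  | _ => true
  end.

Fixpoint fwf (p : form L M) : bool :=
  match p with
  | frel r ts => (length ts =? rel_ar L r) && forallb twf ts
  | feq t1 t2 => twf t1 && twf t2
  | fbot => true
  | fneg q => fwf q
  | fand q1 q2 | for_ q1 q2 => fwf q1 && fwf q2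
  | fall _ q | fex _ q => fwf q
  end.

Fixpoint tvars_in (V : nat -> bool) (t : term L M) : bool :=
  match t with
  | tvar k => V k
  | tpar _ => true
  | tapp _ ts => forallb (tvars_in V) ts
  end.

Fixpoint fvars_in (V : nat -> bool) (p : form L M) : bool :=
  match p with
  | frel _ ts => forallb (tvars_in V) ts
  | feq t1 t2 => tvars_in V t1 && tvars_in V t2
  | fbot => true
  | fneg q => fvars_in V q
  | fand q1 q2 | for_ q1 q2 => fvars_in V q1 && fvars_in V q2
  | fall k q | fex k q => fvars_in (fun j => V j || (j =? k)) q
  end.

Fixpoint tparams (t : term L M) : list M :=
  match t with
  | tvar _ => []
  | tpar a => [a]
  | tapp _ ts => flat_map tparams ts
  end.

Fixpoint fparams (p : form L M) : list M :=
  match p with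
  | frel _ ts => flat_map tparams ts
  | feq t1 t2 => tparams t1 ++ tparams t2
  | fbot => []
  | fneg q => fparams q
  | fand q1 q2 | for_ q1 q2 => fparams q1 ++ fparams q2
  | fall _ q | fex _ q => fparams q
  end.

Variable M' : Type.
Variable g : M -> M'.

Fixpoint tmap (t : term L M) : term L M' :=
  match t with
  | tvar k => tvar k
  | tpar a => tpar (g a)
  | tapp f ts => tapp f (map tmap ts)
  end.

Fixpoint fmap (p : form L M) : form L M' :=
  match p with
  | frel r ts => frel r (map tmap ts)
  | feq t1 t2 => feq (tmap t1) (tmap t2)
  | fbot => fbot
  | fneg q => fneg (fmap q)
  | fand q1 q2 => fand (fmap q1) (fmap q2)
  | for_ q1 q2 => for_ (fmap q1) (fmap q2)
  | fall k q => fall k (fmap q)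
  | fex k q => fex k (fmap q)
  end.
End Syntax.

Section Semantics.
Variables (L : signature) (S : structure L).

Definition upd (v : nat -> S) (k : nat) (a : S) : nat -> S :=
  fun j => if j =? k then a else v j.

Fixpoint teval (v : nat -> S) (t : term L S) : S :=
  match t with
  | tvar k => v k
  | tpar a => a
  | tapp f ts => fun_i S f (map (teval v) ts)
  end.

Fixpoint sat (v : nat -> S) (p : form L S) : Prop :=
  match p with
  | frel r ts => rel_i S r (map (teval v) ts)
  | feq t1 t2 => teval v t1 = teval v t2
  | fbot => False
  | fneg q => ~ sat v q
  | fand q1 q2 => sat v q1 /\ sat v q2
  | for_ q1 q2 => sat v q1 \/ sat v q2
  | fall k q => forall a, sat (upd v k a) q
  | fex k q => exists a, sat (upd v k a) q
  end.

(** Equivalence modulo T (= Th(U) with parameters): equivalence in S. *)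
Definition equivS (p q : form L S) : Prop := forall v, sat v p <-> sat v q.

Definition ftop : form L S := fneg fbot.

Definition LF (V : nat -> bool) (C : S -> Prop) (p : form L S) : Prop :=
  fwf p = true /\ fvars_in V p = true /\ (forall a, In a (fparams p) -> C a).

(** A finitely additive probability measure on the Boolean algebra L_V(C)
    (formulas modulo equivalence), represented by a function on formulas
    whose values outside L_V(C) are irrelevant. *)
Definition is_measure (V : nat -> bool) (C : S -> Prop) (mu : form L S -> R) : Prop :=
  (forall p q, LF V C p -> LF V C q -> equivS p q -> mu p = mu q) /\
  (forall p, LF V C p -> (0 <= mu p)%R) /\
  mu ftop = 1%R /\
  (forall p q, LF V C p -> LF V C q -> equivS (fand p q) fbot ->
     mu (for_ p q) = (mu p + mu q)%R).

Definition agree (V : nat -> bool) (C : S -> Prop) (mu nu : form L S -> R) : Prop :=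
  forall p, LF V C p -> mu p = nu p.

Definition setT : S -> Prop := fun _ => True.

(** variables: x = (x_0,...,x_{n-1}), y = (x_n,...,x_{n+m-1}) *)
Definition xv (n : nat) : nat -> bool := fun k => k <? n.
Definition yv (n m : nat) : nat -> bool := fun k => (n <=? k) && (k <? n + m).
Definition xyv (n m : nat) : nat -> bool := fun k => k <? n + m.

Definition eq_self (l : list nat) : form L S :=
  fold_right (fun k p => fand (feq (tvar k) (tvar k)) p) ftop l.

Definition proj_x (n m : nat) (om : form L S -> R) : form L S -> R :=
  fun p => om (fand p (eq_self (seq n m))).
Definition proj_y (n m : nat) (om : form L S -> R) : form L S -> R :=
  fun p => om (fand (eq_self (seq 0 n)) p).

Definition geE (n m : nat) (A : S -> Prop) (mu nu : form L S -> R) : Prop :=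
  exists lam : form L S -> R,
    is_measure (xyv n m) A lam /\
    agree (xv n) A (proj_x n m lam) mu /\
    forall om : form L S -> R,
      is_measure (xyv n m) setT om ->
      agree (xyv n m) A om lam ->
      agree (xv n) setT (proj_x n m om) mu ->
      agree (yv n m) setT (proj_y n m om) nu.
End Semantics.

(** Monster models: kappa is given as (the cardinality of) a type K. *)
Definition card_lt (X : Type) (C : X -> Prop) (K : Type) : Prop :=
  (exists f : X -> K, forall a b, C a -> C b -> f a = f b -> a = b) /\
  ~ (exists h : K -> X, (forall k, C (h k)) /\ (forall k k', h k = h k' -> k = k')).

Section Monster.
Variables (L : signature) (S : structure L) (K : Type).

Definition small (C : S -> Prop) : Prop := card_lt C K.

(* |L| + aleph_0 < kappa *)
Definition lang_small : Prop :=
  card_lt (fun _ : (funs L + rels L + nat)%type => True) K.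

Definition saturated : Prop :=
  forall C : S -> Prop, small C ->
  forall P : form L S -> Prop,
    (forall p, P p -> @LF L S (fun k => k =? 0) C p) ->
    (forall l : list (form L S), (forall p, In p l -> P p) ->
        exists v : nat -> S, forall p, In p l -> @sat L S v p) ->
    exists v : nat -> S, forall p, P p -> @sat L S v p.

Definition automorphism (s : S -> S) : Prop :=
  (exists s' : S -> S, (forall a, s' (s a) = a) /\ (forall a, s (s' a) = a)) /\
  (forall f (l : list S), length l = fun_ar L f -> s (fun_i S f l) = fun_i S f (map s l)) /\
  (forall r (l : list S), length l = rel_ar L r -> (rel_i S r l <-> rel_i S r (map s l))).

Definition elementary_on (C : S -> Prop) (f : S -> S) : Prop :=
  forall p : form L S, fwf p = true -> fvars_in (fun _ => false) p = true ->
    (forall a, In a (fparams p) -> C a) ->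
    forall v : nat -> S, @sat L S v p <-> @sat L S v (fmap f p).

Definition homogeneous : Prop :=
  forall (C : S -> Prop) (f : S -> S), small C -> elementary_on C f ->
    exists s, automorphism s /\ forall a, C a -> s a = f a.

Definition monster : Prop := lang_small /\ saturated /\ homogeneous.
End Monster.

(* Main.v *)
Require Import Defs.
From Stdlib Require Import Reals List Bool Arith Lra Lia.
From Stdlib Require Import Classical ClassicalEpsilon FunctionalExtensionality.
Import ListNotations.
Open Scope R_scope.

Section Main.
Variables (L : signature) (U : structure L).
Notation S := (dom U).
Notation F := (form L (dom U)).

Lemma term_ind' (P : term L S -> Prop) :
  (forall k, P (tvar k)) -> (forall a, P (tpar a)) ->
  (forall f ts, Forall P ts -> P (tapp f ts)) -> forall t, P t.
Proof.
  intros H1 H2 H3. fix IH 1. intros [k|a|f ts].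
  - apply H1.
  - apply H2.
  - apply H3. revert ts. fix IH2 1. intros [|t ts]; constructor; [apply IH | apply IH2].
Qed.

Lemma tvars_mono (V V' : nat -> bool) (t : term L S) :
  tvars_in V t = true -> (forall k, V k = true -> V' k = true) -> tvars_in V' t = true.
Proof.
  revert t. apply (term_ind' (fun t => tvars_in V t = true -> (forall k, V k = true -> V' k = true) -> tvars_in V' t = true)); simpl; auto.
  intros f ts HF Ht HV. rewrite forallb_forall in *. rewrite Forall_forall in HF.
  intros x Hx. apply HF; auto.
Qed.

Lemma fvars_mono (p : F) : forall (V V' : nat -> bool),
  fvars_in V p = true -> (forall k, V k = true -> V' k = true) -> fvars_in V' p = true.
Proof.
  induction p; simpl; intros V V' Hp HV; auto.
  - rewrite forallb_forall in *. intros x Hx. eapply tvars_mono; eauto.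
  - apply andb_true_iff in Hp as [H1 H2]. rewrite (tvars_mono _ _ _ H1 HV), (tvars_mono _ _ _ H2 HV). reflexivity.
  - eauto.
  - apply andb_true_iff in Hp as [H1 H2]. rewrite (IHp1 _ _ H1 HV), (IHp2 _ _ H2 HV). reflexivity.
  - apply andb_true_iff in Hp as [H1 H2]. rewrite (IHp1 _ _ H1 HV), (IHp2 _ _ H2 HV). reflexivity.
  - eapply IHp; eauto. intros k Hk. apply orb_true_iff in Hk as [Hk|Hk]; apply orb_true_iff; auto.
  - eapply IHp; eauto. intros k Hk. apply orb_true_iff in Hk as [Hk|Hk]; apply orb_true_iff; auto.
Qed.

Lemma teval_ext (V : nat -> bool) (v w : nat -> S) (t : term L S) :
  tvars_in V t = true -> (forall k, V k = true -> v k = w k) -> teval U v t = teval U w t.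
Proof.
  revert t. apply (term_ind' (fun t => tvars_in V t = true -> (forall k, V k = true -> v k = w k) -> teval U v t = teval U w t)); simpl; auto.
  intros f ts HF Ht HV. f_equal. apply map_ext_in. rewrite forallb_forall in Ht. rewrite Forall_forall in HF.
  intros x Hx. apply HF; auto.
Qed.

Lemma sat_ext (p : F) : forall (V : nat -> bool) (v w : nat -> S),
  fvars_in V p = true -> (forall k, V k = true -> v k = w k) -> (sat U v p <-> sat U w p).
Proof.
  induction p; simpl; intros V v w Hp HV.
  - replace (map (teval U v) l) with (map (teval U w) l). tauto.
    apply map_ext_in. rewrite forallb_forall in Hp. intros x Hx. symmetry. eapply teval_ext; eauto.
  - apply andb_true_iff in Hp as [H1 H2]. rewrite (teval_ext _ _ _ _ H1 HV), (teval_ext _ _ _ _ H2 HV). tauto.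
  - tauto.
  - rewrite (IHp _ _ _ Hp HV). tauto.
  - apply andb_true_iff in Hp as [H1 H2]. rewrite (IHp1 _ _ _ H1 HV), (IHp2 _ _ _ H2 HV). tauto.
  - apply andb_true_iff in Hp as [H1 H2]. rewrite (IHp1 _ _ _ H1 HV), (IHp2 _ _ _ H2 HV). tauto.
  - assert (Hu : forall a k, (V k || (k =? n)) = true -> upd U v n a k = upd U w n a k).
    { intros a k Hk. unfold upd. destruct (k =? n) eqn:E; auto. apply orb_true_iff in Hk as [Hk|Hk]; [auto|congruence]. }
    split; intros H a; specialize (H a); specialize (IHp _ _ _ Hp (Hu a)); tauto.
  - assert (Hu : forall a k, (V k || (k =? n)) = true -> upd U v n a k = upd U w n a k).
    { intros a k Hk. unfold upd. destruct (k =? n) eqn:E; auto. apply orb_true_iff in Hk as [Hk|Hk]; [auto|congruence]. }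
    split; intros [a H]; exists a; specialize (IHp _ _ _ Hp (Hu a)); tauto.
Qed.


Definition exy (ks : list nat) (p : F) : F := fold_right (fun k q => fex k q) p ks.

Lemma sat_exy (ks : list nat) (p : F) (v : nat -> S) :
  sat U v (exy ks p) <-> exists w, (forall k, ~ In k ks -> w k = v k) /\ sat U w p.
Proof.
  revert v. induction ks as [|k ks IH]; simpl; intros v.
  - split. intros H; exists v; auto. intros [w [Hw H]].
    assert (E : w = v) by (apply functional_extensionality; intros; apply Hw; auto). subst; auto.
  - split.
    + intros [a Ha]. apply IH in Ha as [w [Hw Hs]]. exists w. split; auto.
      intros j Hj. rewrite Hw by tauto. unfold upd. destruct (j =? k) eqn:E; auto.
      apply Nat.eqb_eq in E. subst. tauto.
    + intros [w [Hw Hs]]. exists (w k). apply IH. exists w. split; auto.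
      intros j Hj. unfold upd. destruct (j =? k) eqn:E. apply Nat.eqb_eq in E; subst; auto.
      apply Hw. intros [H|H]; [subst; rewrite Nat.eqb_refl in E; discriminate|tauto].
Qed.

Lemma fvars_exy (ks : list nat) : forall (V : nat -> bool) (p : F),
  fvars_in (fun j => V j || existsb (Nat.eqb j) ks) p = true -> fvars_in V (exy ks p) = true.
Proof.
  induction ks as [|k ks IH]; simpl; intros V p H.
  - eapply fvars_mono; [exact H|]. intros j Hj. simpl in Hj. rewrite orb_false_r in Hj. auto.
  - apply IH. eapply fvars_mono; [exact H|]. intros j Hj.
    repeat rewrite orb_true_iff in *. tauto.
Qed.

Lemma fwf_exy ks (p : F) : fwf (exy ks p) = fwf p.
Proof. induction ks; simpl; auto. Qed.

Lemma fparams_exy ks (p : F) : fparams (exy ks p) = fparams p.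
Proof. induction ks; simpl; auto. Qed.

Lemma sat_eq_self (l : list nat) v : sat U v (eq_self U l).
Proof. induction l; simpl; auto. Qed.

Lemma fvars_eq_self (V : nat -> bool) (l : list nat) :
  (forall k, In k l -> V k = true) -> fvars_in V (eq_self U l) = true.
Proof.
  induction l as [|k l IH]; simpl; intros H; auto.
  rewrite H by auto. simpl. apply IH. auto.
Qed.

Lemma fwf_eq_self l : fwf (eq_self U l) = true.
Proof. induction l; simpl; auto. Qed.

Lemma fparams_eq_self l : fparams (eq_self U l) = [].
Proof. induction l; simpl; auto. Qed.

Section LFs.
Variables (V : nat -> bool) (C : S -> Prop).

Lemma LF_and p q : LF U V C p -> LF U V C q -> LF U V C (fand p q).
Proof.
  intros [H1 [H2 H3]] [K1 [K2 K3]]. split; [|split]; simpl.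
  rewrite H1, K1; auto. rewrite H2, K2; auto.
  intros a Ha. apply in_app_or in Ha as [Ha|Ha]; auto.
Qed.

Lemma LF_or p q : LF U V C p -> LF U V C q -> LF U V C (for_ p q).
Proof.
  intros [H1 [H2 H3]] [K1 [K2 K3]]. split; [|split]; simpl.
  rewrite H1, K1; auto. rewrite H2, K2; auto.
  intros a Ha. apply in_app_or in Ha as [Ha|Ha]; auto.
Qed.

Lemma LF_neg p : LF U V C p -> LF U V C (fneg p).
Proof. intros [H1 [H2 H3]]. split; [|split]; simpl; auto. Qed.

Lemma LF_bot : LF U V C fbot.
Proof. split; [|split]; simpl; auto. intros a []. Qed.

Lemma LF_top : LF U V C (ftop U).
Proof. split; [|split]; simpl; auto. intros a []. Qed.
End LFs.

Lemma LF_mono (V V' : nat -> bool) (C C' : S -> Prop) p :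
  (forall k, V k = true -> V' k = true) -> (forall a, C a -> C' a) ->
  LF U V C p -> LF U V' C' p.
Proof.
  intros HV HC [H1 [H2 H3]]. split; [|split]; auto. eapply fvars_mono; eauto.
Qed.

Variables (n m : nat).
Definition eqy : F := eq_self U (seq n m).
Definition cx (p : F) : F := exy (seq n m) p.

Lemma xv_xyv k : xv n k = true -> xyv n m k = true.
Proof. unfold xv, xyv. intros H. apply Nat.ltb_lt in H. apply Nat.ltb_lt. lia. Qed.

Lemma LF_xy (C : S -> Prop) p : LF U (xv n) C p -> LF U (xyv n m) C p.
Proof. apply LF_mono; auto. apply xv_xyv. Qed.

Lemma LF_eqy (C : S -> Prop) : LF U (xyv n m) C eqy.
Proof.
  split; [|split]. apply fwf_eq_self. apply fvars_eq_self. intros k Hk.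
  apply in_seq in Hk. unfold xyv. apply Nat.ltb_lt. lia.
  unfold eqy. rewrite fparams_eq_self. intros a [].
Qed.

Lemma LF_cx (C : S -> Prop) p : LF U (xyv n m) C p -> LF U (xv n) C (cx p).
Proof.
  intros [H1 [H2 H3]]. unfold cx. split; [|split].
  rewrite fwf_exy; auto.
  apply fvars_exy. eapply fvars_mono; [exact H2|]. intros k Hk. unfold xyv in Hk. apply Nat.ltb_lt in Hk.
  unfold xv. apply orb_true_iff. destruct (Nat.ltb_spec k n); [left; auto|right].
  apply existsb_exists. exists k. split. apply in_seq. lia. apply Nat.eqb_refl.
  rewrite fparams_exy. auto.
Qed.

Lemma sat_cx_intro p v : sat U v p -> sat U v (cx p).
Proof. intros H. apply sat_exy. exists v. auto. Qed.

Lemma sat_cx_elim p v : sat U v (cx p) -> exists w, (forall k, (k < n)%nat -> w k = v k) /\ sat U w p.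
Proof.
  intros H. apply sat_exy in H as [w [Hw Hs]]. exists w. split; auto.
  intros k Hk. apply Hw. intros Hin. apply in_seq in Hin. lia.
Qed.

Lemma sat_x_ext (C : S -> Prop) p v w : LF U (xv n) C p -> (forall k, (k < n)%nat -> v k = w k) ->
  (sat U v p <-> sat U w p).
Proof.
  intros [_ [H _]] Hk. apply (sat_ext p (xv n)); auto. intros k Hk'. apply Hk. unfold xv in Hk'. apply Nat.ltb_lt; auto.
Qed.

Definition sumR (l : list R) : R := fold_right Rplus 0 l.

Lemma sumR_app l1 l2 : sumR (l1 ++ l2) = sumR l1 + sumR l2.
Proof. induction l1; simpl; [lra|]. unfold sumR in *. simpl. rewrite IHl1. lra. Qed.

Lemma sumR_ext {X} (f g : X -> R) l : (forall x, In x l -> f x = g x) -> sumR (map f l) = sumR (map g l).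
Proof. intros H. f_equal. apply map_ext_in. auto. Qed.

Lemma sumR_scal_l {X} (c : R) (f : X -> R) l : sumR (map (fun x => c * f x) l) = c * sumR (map f l).
Proof. induction l; simpl; [lra|]. unfold sumR in *; simpl. rewrite IHl. lra. Qed.

Lemma sumR_scal_r {X} (c : R) (f : X -> R) l : sumR (map (fun x => f x * c) l) = sumR (map f l) * c.
Proof. induction l; simpl; [lra|]. unfold sumR in *; simpl. rewrite IHl. lra. Qed.

Lemma sumR_add {X} (f g : X -> R) l : sumR (map (fun x => f x + g x) l) = sumR (map f l) + sumR (map g l).
Proof. induction l; simpl; [lra|]. unfold sumR in *; simpl. rewrite IHl. lra. Qed.

Lemma sumR_le {X} (f g : X -> R) l : (forall x, In x l -> f x <= g x) -> sumR (map f l) <= sumR (map g l).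
Proof. induction l; simpl; intros H; [lra|]. unfold sumR in *; simpl.
  assert (f a <= g a) by auto. assert (fold_right Rplus 0 (map f l) <= fold_right Rplus 0 (map g l)) by auto. lra. Qed.

Lemma sumR_flat_map {X Y} (h : Y -> R) (k : X -> list Y) l :
  sumR (map h (flat_map k l)) = sumR (map (fun x => sumR (map h (k x))) l).
Proof. induction l; simpl; auto. rewrite map_app, sumR_app, IHl. reflexivity. Qed.

Fixpoint atoms (l : list F) : list F :=
  match l with
  | [] => [ftop U]
  | p :: l => map (fand p) (atoms l) ++ map (fand (fneg p)) (atoms l)
  end.

Lemma atoms_LF V C l : (forall p, In p l -> LF U V C p) -> forall a, In a (atoms l) -> LF U V C a.
Proof.
  induction l as [|p l IH]; simpl; intros H a Ha.
  - destruct Ha as [<-|[]]. apply LF_top.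
  - apply in_app_or in Ha as [Ha|Ha]; apply in_map_iff in Ha as [b [<- Hb]].
    apply LF_and; auto. apply LF_and; auto. apply LF_neg; auto.
Qed.

Lemma atoms_dec l : forall a, In a (atoms l) -> forall p, In p l ->
  (forall v, sat U v a -> sat U v p) \/ (forall v, sat U v a -> ~ sat U v p).
Proof.
  induction l as [|q l IH]; simpl; intros a Ha p Hp; [destruct Hp|].
  apply in_app_or in Ha as [Ha|Ha]; apply in_map_iff in Ha as [b [<- Hb]].
  - destruct Hp as [<-|Hp]. left; simpl; tauto.
    destruct (IH b Hb p Hp) as [H|H]; [left|right]; simpl; intros v [_ Hv]; auto.
  - destruct Hp as [<-|Hp]. right; simpl; tauto.
    destruct (IH b Hb p Hp) as [H|H]; [left|right]; simpl; intros v [_ Hv]; auto.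
Qed.

Section Meas.
Variables (V : nat -> bool) (C : S -> Prop) (mu : F -> R).
Hypothesis Hmu : is_measure U V C mu.

Lemma m_inv p q : LF U V C p -> LF U V C q -> (forall v, sat U v p <-> sat U v q) -> mu p = mu q.
Proof. intros. destruct Hmu as [Hi _]. apply Hi; auto. Qed.

Lemma m_nonneg p : LF U V C p -> 0 <= mu p.
Proof. destruct Hmu as [_ [H _]]. auto. Qed.

Lemma m_top : mu (ftop U) = 1.
Proof. destruct Hmu as [_ [_ [H _]]]. auto. Qed.

Lemma m_add p q : LF U V C p -> LF U V C q -> (forall v, ~ (sat U v p /\ sat U v q)) ->
  mu (for_ p q) = mu p + mu q.
Proof. destruct Hmu as [_ [_ [_ H]]]. intros. apply H; auto. intros v; simpl. firstorder. Qed.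

Lemma m_bot : mu fbot = 0.
Proof.
  assert (E : mu (for_ fbot fbot) = mu fbot + mu fbot).
  { apply m_add; try apply LF_bot. simpl; tauto. }
  assert (E2 : mu (for_ fbot fbot) = mu fbot).
  { apply m_inv. apply LF_or; apply LF_bot. apply LF_bot. simpl; tauto. }
  lra.
Qed.

Lemma m_zero p : LF U V C p -> (forall v, ~ sat U v p) -> mu p = 0.
Proof. intros Hp H. rewrite <- m_bot. apply m_inv; auto. apply LF_bot. simpl. firstorder. Qed.

Lemma m_split p q : LF U V C p -> LF U V C q -> mu p = mu (fand p q) + mu (fand p (fneg q)).
Proof.
  intros Hp Hq. rewrite <- m_add. apply m_inv; auto.
  apply LF_or; apply LF_and; auto; apply LF_neg; auto.
  intros v; simpl. tauto.
  apply LF_and; auto. apply LF_and; auto; apply LF_neg; auto.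
  intros v; simpl. tauto.
Qed.

Lemma m_mono p q : LF U V C p -> LF U V C q -> (forall v, sat U v p -> sat U v q) -> mu p <= mu q.
Proof.
  intros Hp Hq H. rewrite (m_split q p Hq Hp).
  assert (E : mu (fand q p) = mu p). { apply m_inv; auto. apply LF_and; auto. intros v; simpl. firstorder. }
  assert (0 <= mu (fand q (fneg p))). { apply m_nonneg. apply LF_and; auto; apply LF_neg; auto. }
  lra.
Qed.

Lemma m_atoms l : (forall p, In p l -> LF U V C p) -> forall th, LF U V C th ->
  mu th = sumR (map (fun a => mu (fand th a)) (atoms l)).
Proof.
  induction l as [|p l IH]; simpl; intros Hl th Hth.
  - unfold sumR; simpl. rewrite Rplus_0_r. apply m_inv; auto. apply LF_and; auto. apply LF_top.
    intros v; simpl; tauto.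
  - assert (Hl' : forall q, In q l -> LF U V C q) by auto.
    assert (Hp : LF U V C p) by auto.
    rewrite (m_split th p Hth Hp). rewrite map_app, sumR_app, !map_map.
    rewrite (IH Hl' (fand th p)) by (apply LF_and; auto).
    rewrite (IH Hl' (fand th (fneg p))) by (apply LF_and; auto; apply LF_neg; auto).
    f_equal; apply sumR_ext; intros a Ha; apply m_inv.
    all: try (apply LF_and; [apply LF_and; auto|eapply atoms_LF; eauto]).
    all: try (apply LF_and; [auto|apply LF_and; [auto|eapply atoms_LF; eauto]]).
    all: try apply LF_neg; auto.
    all: intros v; simpl; tauto.
Qed.
End Meas.

Lemma Rinv_nonneg x : 0 <= x -> 0 <= / x.
Proof. intros H. destruct (Req_dec x 0) as [->|Hx0]. rewrite Rinv_0; lra. apply Rlt_le, Rinv_0_lt_compat; lra. Qed.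

Lemma Rdiv_aux1 a z : 0 <= a -> a <= z -> a * / z * z = a.
Proof. intros. destruct (Req_dec z 0) as [->|Hz0]. rewrite Rinv_0. lra. field; auto. Qed.

Lemma Rdiv_aux2 a z : 0 <= a -> a <= z -> z * (/ z * a) = a.
Proof. intros. destruct (Req_dec z 0) as [->|Hz0]. rewrite Rinv_0. lra. field; auto. Qed.

Definition ind (p : F) (v : nat -> S) : R :=
  if excluded_middle_informative (sat U v p) then 1 else 0.

Lemma ind_1 p v : sat U v p -> ind p v = 1.
Proof. intros H. unfold ind. destruct (excluded_middle_informative (sat U v p)); tauto. Qed.
Lemma ind_0 p v : ~ sat U v p -> ind p v = 0.
Proof. intros H. unfold ind. destruct (excluded_middle_informative (sat U v p)); tauto. Qed.
Lemma ind_01 p v : 0 <= ind p v <= 1.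
Proof. unfold ind. destruct (excluded_middle_informative (sat U v p)); lra. Qed.

Lemma pt_ex (p : F) : exists v : nat -> S, (exists w, sat U w p) -> sat U v p.
Proof.
  destruct (classic (exists w, sat U w p)) as [[w Hw]|H]. exists w; auto.
  destruct (dom_inhabited U) as [s]. exists (fun _ => s). intros; contradiction.
Qed.
Definition pt (p : F) : nat -> S := proj1_sig (constructive_indefinite_description _ (pt_ex p)).
Lemma pt_spec p : (exists w, sat U w p) -> sat U (pt p) p.
Proof. unfold pt. destruct (constructive_indefinite_description _ (pt_ex p)); simpl; auto. Qed.

Definition mix (D : list (R * (nat -> S))) (p : F) : R :=
  sumR (map (fun wv => fst wv * ind p (snd wv)) D).

Section Mix.
Variable D : list (R * (nat -> S)).
Hypothesis HD : forall wv, In wv D -> 0 <= fst wv.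

Lemma mix_ext p q : (forall v, sat U v p <-> sat U v q) -> mix D p = mix D q.
Proof.
  intros H. unfold mix. apply sumR_ext. intros [w v] _. simpl. f_equal.
  destruct (classic (sat U v p)) as [Hp|Hp].
  rewrite !ind_1; auto. apply H; auto. rewrite !ind_0; auto. rewrite <- H; auto.
Qed.

Lemma mix_add p q : (forall v, ~ (sat U v p /\ sat U v q)) -> mix D (for_ p q) = mix D p + mix D q.
Proof.
  intros H. unfold mix. rewrite <- sumR_add. apply sumR_ext. intros [w v] _. simpl.
  destruct (classic (sat U v p)) as [Hp|Hp]; destruct (classic (sat U v q)) as [Hq|Hq].
  - exfalso; apply (H v); auto.
  - rewrite (ind_1 (for_ p q)), (ind_1 p), (ind_0 q); simpl; auto. ring.
  - rewrite (ind_1 (for_ p q)), (ind_0 p), (ind_1 q); simpl; auto. ring.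
  - rewrite (ind_0 (for_ p q)), (ind_0 p), (ind_0 q); simpl; auto. ring. tauto.
Qed.

Lemma mix_nonneg p : 0 <= mix D p.
Proof.
  unfold mix. apply Rle_trans with (sumR (map (fun _ : R * (nat -> S) => 0) D)).
  clear HD. induction D; unfold sumR in *; simpl; lra.
  apply sumR_le. intros [w v] Hwv. simpl. apply HD in Hwv. simpl in Hwv.
  destruct (ind_01 p v). apply Rmult_le_pos; auto.
Qed.

Lemma mix_le_top p : mix D p <= mix D (ftop U).
Proof.
  unfold mix. apply sumR_le. intros [w v] Hwv. apply HD in Hwv. simpl in *.
  rewrite (ind_1 (ftop U)) by (simpl; auto). destruct (ind_01 p v). 
  rewrite Rmult_1_r. rewrite <- (Rmult_1_r w) at 2. apply Rmult_le_compat_l; auto.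
Qed.
End Mix.

Lemma LF_T V (C : S -> Prop) p : LF U V C p -> LF U V (setT U) p.
Proof. apply LF_mono; auto. intros; exact I. Qed.

Section Fin.
Variables (A : S -> Prop) (lam mu : F -> R).
Hypothesis Hlam : is_measure U (xyv n m) A lam.
Hypothesis Hmu : is_measure U (xv n) (setT U) mu.
Hypothesis Hag : agree U (xv n) A (proj_x U n m lam) mu.

Lemma lam_mu e : LF U (xv n) A e -> lam e = mu e.
Proof.
  intros He. rewrite <- (Hag e He). unfold proj_x. apply (m_inv _ _ _ Hlam).
  apply LF_xy; auto. apply LF_and. apply LF_xy; auto. apply LF_eqy.
  intros v; simpl. pose proof (sat_eq_self (seq n m) v). tauto.
Qed.

Variables (lphi lpsi : list F).
Hypothesis Hlphi : forall p, In p lphi -> LF U (xyv n m) A p.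
Hypothesis Hlpsi : forall p, In p lpsi -> LF U (xv n) (setT U) p.

Definition Aphi := atoms lphi.
Definition lc := map cx Aphi.
Definition Ae := atoms lc.
Definition Apsi := atoms lpsi.

Lemma LF_Aphi a : In a Aphi -> LF U (xyv n m) A a.
Proof. apply atoms_LF; auto. Qed.
Lemma LF_lc c : In c lc -> LF U (xv n) A c.
Proof. unfold lc. intros H. apply in_map_iff in H as [a [<- Ha]]. apply LF_cx, LF_Aphi; auto. Qed.
Lemma LF_Ae e : In e Ae -> LF U (xv n) A e.
Proof. apply atoms_LF. apply LF_lc. Qed.
Lemma LF_Apsi b : In b Apsi -> LF U (xv n) (setT U) b.
Proof. apply atoms_LF; auto. Qed.

Definition W e a b := lam (fand e a) * mu (fand e b) * / mu e.
Definition P e a b := pt (fand (fand e a) b).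
Definition Dfin : list (R * (nat -> S)) :=
  flat_map (fun e => flat_map (fun a => map (fun b => (W e a b, P e a b)) Apsi) Aphi) Ae.

Lemma W_nonneg e a b : In e Ae -> In a Aphi -> In b Apsi -> 0 <= W e a b.
Proof.
  intros He Ha Hb. unfold W. pose proof (LF_Ae e He). pose proof (LF_Aphi a Ha). pose proof (LF_Apsi b Hb).
  apply Rmult_le_pos; [apply Rmult_le_pos|].
  apply (m_nonneg _ _ _ Hlam). apply LF_and; auto. apply LF_xy; auto.
  apply (m_nonneg _ _ _ Hmu). apply LF_and; auto. eapply LF_T; eauto.
  apply Rinv_nonneg. apply (m_nonneg _ _ _ Hmu). eapply LF_T; eauto.
Qed.

Lemma Dfin_nonneg wv : In wv Dfin -> 0 <= fst wv.
Proof.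
  unfold Dfin. intros H. apply in_flat_map in H as [e [He H]]. apply in_flat_map in H as [a [Ha H]].
  apply in_map_iff in H as [b [<- Hb]]. simpl. apply W_nonneg; auto.
Qed.

Lemma key e a b : In e Ae -> In a Aphi -> In b Apsi ->
  (forall w, ~ sat U w (fand (fand e a) b)) -> lam (fand e a) = 0 \/ mu (fand e b) = 0.
Proof.
  intros He Ha Hb Hno. pose proof (LF_Ae e He) as LFe. pose proof (LF_Aphi a Ha) as LFa. pose proof (LF_Apsi b Hb) as LFb.
  destruct (classic (exists w, sat U w (fand e a))) as [[w1 H1]|H1].
  2:{ left. apply (m_zero _ _ _ Hlam). apply LF_and; auto. apply LF_xy; auto. firstorder. }
  destruct (classic (exists w, sat U w (fand e b))) as [[w2 H2]|H2].
  2:{ right. apply (m_zero _ _ _ Hmu). apply LF_and; auto. eapply LF_T; eauto. firstorder. }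
  exfalso. simpl in H1, H2. destruct H1 as [H1e H1a]. destruct H2 as [H2e H2b].
  assert (Hc : In (cx a) lc) by (apply in_map; auto).
  destruct (atoms_dec lc e He (cx a) Hc) as [Hd|Hd].
  - apply Hd in H2e as H2c. apply sat_cx_elim in H2c as [w [Hw Hwa]]. apply (Hno w). simpl. split; [split|]; auto.
    + apply (sat_x_ext A e w w2 LFe Hw); auto.
    + apply (sat_x_ext (setT U) b w w2 LFb Hw); auto.
  - apply (Hd w1 H1e). apply sat_cx_intro; auto.
Qed.

Lemma ptw_phi e a b p : In e Ae -> In a Aphi -> In b Apsi -> In p lphi ->
  W e a b * ind p (P e a b) = lam (fand (fand p e) a) * mu (fand e b) * / mu e.
Proof.
  intros He Ha Hb Hp. pose proof (LF_Ae e He) as LFe. pose proof (LF_Aphi a Ha) as LFa. pose proof (LF_Apsi b Hb) as LFb.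
  pose proof (Hlphi p Hp) as LFp. pose proof (LF_xy A e LFe) as LFe'.
  unfold W. set (v := P e a b).
  destruct (classic (sat U v (fand (fand e a) b))) as [Hv|Hv].
  - simpl in Hv. destruct Hv as [[He' Ha'] Hb'].
    destruct (atoms_dec lphi a Ha p Hp) as [Hd|Hd].
    + rewrite ind_1 by auto.
      rewrite (m_inv _ _ _ Hlam (fand (fand p e) a) (fand e a)). ring.
      apply LF_and; auto; apply LF_and; auto. apply LF_and; auto.
      intros w; simpl. specialize (Hd w). tauto.
    + rewrite ind_0 by auto.
      rewrite (m_zero _ _ _ Hlam (fand (fand p e) a)). ring.
      apply LF_and; auto; apply LF_and; auto.
      intros w; simpl. specialize (Hd w). tauto.
  - assert (Hno : forall w, ~ sat U w (fand (fand e a) b)).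
    { intros w Hw. apply Hv. apply pt_spec. exists w; auto. }
    destruct (key e a b He Ha Hb Hno) as [H0|H0].
    + rewrite H0. assert (lam (fand (fand p e) a) = 0).
      { apply Rle_antisym. rewrite <- H0. apply (m_mono _ _ _ Hlam).
        apply LF_and; auto; apply LF_and; auto. apply LF_and; auto. intros w; simpl; tauto.
        apply (m_nonneg _ _ _ Hlam). apply LF_and; auto; apply LF_and; auto. }
      rewrite H. ring.
    + rewrite H0. ring.
Qed.

Lemma ptw_psi e a b p : In e Ae -> In a Aphi -> In b Apsi -> In p lpsi ->
  W e a b * ind p (P e a b) = lam (fand e a) * mu (fand (fand p e) b) * / mu e.
Proof.
  intros He Ha Hb Hp. pose proof (LF_Ae e He) as LFe. pose proof (LF_Aphi a Ha) as LFa. pose proof (LF_Apsi b Hb) as LFb.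
  pose proof (Hlpsi p Hp) as LFp. pose proof (LF_T _ _ _ LFe) as LFe'.
  unfold W. set (v := P e a b).
  destruct (classic (sat U v (fand (fand e a) b))) as [Hv|Hv].
  - simpl in Hv. destruct Hv as [[He' Ha'] Hb'].
    destruct (atoms_dec lpsi b Hb p Hp) as [Hd|Hd].
    + rewrite ind_1 by auto.
      rewrite (m_inv _ _ _ Hmu (fand (fand p e) b) (fand e b)). ring.
      apply LF_and; auto; apply LF_and; auto. apply LF_and; auto.
      intros w; simpl. specialize (Hd w). tauto.
    + rewrite ind_0 by auto.
      rewrite (m_zero _ _ _ Hmu (fand (fand p e) b)). ring.
      apply LF_and; auto; apply LF_and; auto.
      intros w; simpl. specialize (Hd w). tauto.
  - assert (Hno : forall w, ~ sat U w (fand (fand e a) b)).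
    { intros w Hw. apply Hv. apply pt_spec. exists w; auto. }
    destruct (key e a b He Ha Hb Hno) as [H0|H0].
    + rewrite H0. ring.
    + rewrite H0. assert (mu (fand (fand p e) b) = 0).
      { apply Rle_antisym. rewrite <- H0. apply (m_mono _ _ _ Hmu).
        apply LF_and; auto; apply LF_and; auto. apply LF_and; auto. intros w; simpl; tauto.
        apply (m_nonneg _ _ _ Hmu). apply LF_and; auto; apply LF_and; auto. }
      rewrite H. ring.
Qed.

Lemma mix_triple p : mix Dfin p =
  sumR (map (fun e => sumR (map (fun a => sumR (map (fun b => W e a b * ind p (P e a b)) Apsi)) Aphi)) Ae).
Proof.
  unfold mix, Dfin. rewrite sumR_flat_map. apply sumR_ext. intros e _.
  rewrite sumR_flat_map. apply sumR_ext. intros a _. rewrite map_map. reflexivity.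
Qed.

Lemma C1 p : In p lphi -> mix Dfin p = lam p.
Proof.
  intros Hp. pose proof (Hlphi p Hp) as LFp. rewrite mix_triple. unfold Ae, Aphi, Apsi.
  transitivity (sumR (map (fun e => sumR (map (fun a => lam (fand (fand p e) a)) Aphi)) Ae)).
  - apply sumR_ext; intros e He; apply sumR_ext; intros a Ha.
    pose proof (LF_Ae e He) as LFe. pose proof (LF_Aphi a Ha) as LFa.
    rewrite (sumR_ext _ (fun b => lam (fand (fand p e) a) * / mu e * mu (fand e b)))
      by (intros b Hb; rewrite ptw_phi; auto; ring).
    rewrite sumR_scal_l. rewrite <- (m_atoms _ _ _ Hmu lpsi Hlpsi e (LF_T _ _ _ LFe)).
    apply Rdiv_aux1.
    apply (m_nonneg _ _ _ Hlam). apply LF_and; auto; apply LF_and; auto; apply LF_xy; auto.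
    rewrite <- (lam_mu e LFe). apply (m_mono _ _ _ Hlam).
    apply LF_and; auto; apply LF_and; auto; apply LF_xy; auto. apply LF_xy; auto. intros w; simpl; tauto.
  - rewrite (m_atoms _ _ _ Hlam lc (fun c Hc => LF_xy _ _ (LF_lc c Hc)) p LFp).
    apply sumR_ext; intros e He. symmetry. apply (m_atoms _ _ _ Hlam lphi Hlphi).
    apply LF_and; auto. apply LF_xy; auto. apply LF_Ae; auto.
Qed.

Lemma C2 p : In p lpsi -> mix Dfin p = mu p.
Proof.
  intros Hp. pose proof (Hlpsi p Hp) as LFp. rewrite mix_triple. unfold Ae, Aphi, Apsi.
  transitivity (sumR (map (fun e => mu (fand p e)) Ae)).
  - apply sumR_ext; intros e He. pose proof (LF_Ae e He) as LFe.
    transitivity (sumR (map (fun a => lam (fand e a) * (/ mu e * mu (fand p e))) (atoms lphi))).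
    + apply sumR_ext; intros a Ha.
      rewrite (sumR_ext _ (fun b => lam (fand e a) * / mu e * mu (fand (fand p e) b)))
        by (intros b Hb; rewrite ptw_psi; auto; ring).
      rewrite sumR_scal_l. rewrite <- (m_atoms _ _ _ Hmu lpsi Hlpsi).
      ring. apply LF_and; auto. eapply LF_T; eauto.
    + rewrite sumR_scal_r. rewrite <- (m_atoms _ _ _ Hlam lphi Hlphi e (LF_xy _ _ LFe)).
      rewrite (lam_mu e LFe). apply Rdiv_aux2.
      apply (m_nonneg _ _ _ Hmu). apply LF_and; auto. eapply LF_T; eauto.
      apply (m_mono _ _ _ Hmu). apply LF_and; auto. eapply LF_T; eauto. eapply LF_T; eauto. intros w; simpl; tauto.
  - symmetry. apply (m_atoms _ _ _ Hmu lc (fun c Hc => LF_T _ _ _ (LF_lc c Hc)) p LFp).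
Qed.
End Fin.

End Main.

Definition ULIM : Prop := forall (I X : Type) (f : I -> X -> R) (good : X -> I -> Prop),
  (forall x i, 0 <= f i x /\ f i x <= 1) ->
  (forall l : list X, exists i, forall x, In x l -> good x i) ->
  exists g : X -> R,
   (forall x c, (forall i, good x i -> f i x = c) -> g x = c) /\
   (forall x y z, (forall i, f i z = f i x + f i y) -> g z = g x + g y) /\
   (forall x, (forall i, 0 <= f i x) -> 0 <= g x) /\
   (forall x y, (forall i, f i x = f i y) -> g x = g y).

Definition strip {L : signature} {M : Type} (p : form L M) : form L M :=
  match p with fand q _ => q | _ => p end.

Definition filterP {X : Type} (Pr : X -> Prop) (l : list X) : list X :=
  filter (fun p => if excluded_middle_informative (Pr p) then true else false) l.

Lemma filterP_In {X : Type} (Pr : X -> Prop) l x : In x (filterP Pr l) <-> In x l /\ Pr x.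
Proof.
  unfold filterP. rewrite filter_In. destruct (excluded_middle_informative (Pr x)); intuition congruence.
Qed.

Lemma amalg (UL : ULIM) (L : signature) (U : structure L) (n m : nat) (A : U -> Prop)
  (lam mu : form L U -> R) :
  is_measure U (xyv n m) A lam -> is_measure U (xv n) (setT U) mu ->
  agree U (xv n) A (proj_x U n m lam) mu ->
  exists om, is_measure U (xyv n m) (setT U) om /\ agree U (xyv n m) A om lam /\
    agree U (xv n) (setT U) (proj_x U n m om) mu.
Proof.
  intros Hlam Hmu Hag.
  set (lphiS := fun Sl : list (form L U) => ftop U :: filterP (LF U (xyv n m) A) Sl).
  set (lpsiS := fun Sl : list (form L U) => filterP (LF U (xv n) (setT U)) Sl).
  assert (H1 : forall Sl p, In p (lphiS Sl) -> LF U (xyv n m) A p).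
  { intros Sl p [<-|Hp]. apply LF_top. apply filterP_In in Hp; tauto. }
  assert (H2 : forall Sl p, In p (lpsiS Sl) -> LF U (xv n) (setT U) p).
  { intros Sl p Hp. apply filterP_In in Hp; tauto. }
  set (D := fun Sl => Dfin L U n m lam mu (lphiS Sl) (lpsiS Sl)).
  assert (HD : forall Sl wv, In wv (D Sl) -> 0 <= fst wv).
  { intros Sl. apply (Dfin_nonneg L U n m A lam mu Hlam Hmu _ _ (H1 Sl) (H2 Sl)). }
  assert (Htop : forall Sl, mix L U (D Sl) (ftop U) = 1).
  { intros Sl. rewrite (C1 L U n m A lam mu Hlam Hmu Hag _ _ (H1 Sl) (H2 Sl)). apply (m_top _ _ _ _ _ Hlam). left; auto. }
  destruct (UL (list (form L U)) (form L U) (fun Sl p => mix L U (D Sl) p)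
     (fun p Sl => In p Sl /\ In (strip p) Sl)) as [g [G1 [G2 [G3 G4]]]].
  - intros p Sl. cbv beta. split. apply (mix_nonneg _ _ _ (HD Sl)). rewrite <- (Htop Sl). apply (mix_le_top _ _ _ (HD Sl)).
  - intros l. exists (l ++ map strip l). intros x Hx. split; apply in_or_app; [left; auto|right; apply in_map; auto].
  - exists g. split; [|split].
    + split; [|split; [|split]].
      * intros p q _ _ Heq. apply G4. intros Sl. apply mix_ext. exact Heq.
      * intros p _. apply G3. intros Sl. apply (mix_nonneg _ _ _ (HD Sl)).
      * apply G1. intros Sl _. apply Htop.
      * intros p q _ _ Hd. apply G2. intros Sl. apply mix_add. intros v Hv. apply (Hd v). exact Hv.
    + intros p Hp. apply G1. intros Sl [HI _].
      apply (C1 L U n m A lam mu Hlam Hmu Hag _ _ (H1 Sl) (H2 Sl)). right. apply filterP_In. auto.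
    + intros p Hp. unfold proj_x. apply G1. intros Sl [_ HI]. simpl in HI.
      rewrite (mix_ext L U (D Sl) _ p).
      apply (C2 L U n m A lam mu Hlam Hmu Hag _ _ (H1 Sl) (H2 Sl)). apply filterP_In. auto.
      intros v. simpl. pose proof (sat_eq_self L U (seq n m) v). tauto.
Qed.

Lemma meas_weaken {L : signature} (U : structure L) V (C : U -> Prop) om :
  is_measure U V (setT U) om -> is_measure U V C om.
Proof.
  intros [H1 [H2 [H3 H4]]]. split; [|split; [|split]]; auto.
  - intros p q Hp Hq. apply H1; eapply LF_T; eauto.
  - intros p Hp. apply H2; eapply LF_T; eauto.
  - intros p q Hp Hq. apply H4; eapply LF_T; eauto.
Qed.

Theorem lemma3p8_gen (UL : ULIM) (L : signature) (U : structure L) (K : Type) (n m : nat)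
  (A B : dom U -> Prop) (mu nu : form L (dom U) -> R) :
  monster U K -> small U K A -> small U K B -> (forall a, A a -> B a) ->
  is_measure U (xv n) (setT U) mu -> is_measure U (yv n m) (setT U) nu ->
  geE U n m A mu nu -> geE U n m B mu nu.
Proof.
  intros _ _ _ HAB Hmu _ [lam [Hlam [Hag H3]]].
  destruct (amalg UL L U n m A lam mu Hlam Hmu Hag) as [g [Hg [HgA Hgx]]].
  exists g. split; [|split].
  - apply meas_weaken; auto.
  - intros p Hp. apply Hgx. eapply LF_T; eauto.
  - intros om Hom HomB Homx. apply H3; auto.
    intros p Hp. rewrite HomB. apply HgA; auto.
    eapply LF_mono; [| |exact Hp]; auto.
Qed.

Module UL.
From mathcomp Require Import all_boot all_order all_algebra.
From mathcomp Require Import all_classical all_reals.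
From mathcomp Require Import topology normedtype.
From mathcomp Require Import Rstruct Rstruct_topology.
Import Order.TTheory GRing.Theory Num.Theory.
Local Open Scope classical_set_scope.

Lemma ultra_fmap (I : Type) (G : set_system I) (h : I -> R) :
  UltraFilter G -> UltraFilter (h @ G).
Proof.
move=> UG; split; first exact: fmap_proper_filter.
move=> H PH sub; rewrite predeqE => A; split; last exact: sub.
move=> HA; have [//|GnA] := in_ultra_setVsetC (h @^-1` A) UG.
have HnA : H (~` A) by apply: sub.
exfalso; apply: (filter_not_empty H); rewrite -(setICr A); exact: filterI.
Qed.

Lemma ulim : ULIM.
Proof.
move=> I X f good f01' fin.
have f01 : forall x i, (0 <= f i x <= 1)%R.
  by move=> x i; have [h1 h2] := f01' x i; apply/andP; split; apply/RleP.
pose F : set_system I := fun A => exists l, forall i, (forall x, In x l -> good x i) -> A i.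
have FF : ProperFilter F.
  split.
    move=> [l Hl]; have [i Hi] := fin l; exact: (Hl i Hi).
  split.
  - by exists nil.
  - move=> A B [l1 H1] [l2 H2]; exists (l1 ++ l2) => i Hi; split.
      by apply: H1 => x Hx; apply: Hi; apply: in_or_app; left.
    by apply: H2 => x Hx; apply: Hi; apply: in_or_app; right.
  - by move=> A B AB [l Hl]; exists l => i Hi; apply: AB; apply: Hl.
have [G [UG FG]] := ultraFilterLemma FF.
have lim_ex : forall x, exists p : R, (fun i => f i x) @ G --> p.
  move=> x.
  have UH := @ultra_fmap I G (fun i => f i x) UG.
  have SC : compact (`[(0:R)%R, (1:R)%R] : set R) by exact: segment_compact.
  move: SC.
  rewrite compact_ultra => /(_ _ UH).
  case.
    apply: FG; exists nil => i _ /=.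
    by rewrite in_itv /=; have /andP[] := f01 x i => -> ->.
  by move=> p [_ Hp]; exists p.
have [g Hg] : exists g : X -> R, forall x, (fun i => f i x) @ G --> g x.
  by exists (fun x => projT1 (cid (lim_ex x))) => x; exact: (projT2 (cid (lim_ex x))).
have U : forall x c, (fun i => f i x) @ G --> c -> g x = c.
  move=> x c H; exact: (cvg_unique (@norm_hausdorff _ R^o) (Hg x) H).
exists g; split; [|split; [|split]].
- move=> x c Hc; apply: U.
  apply: (cvg_near_cst c); apply: FG; exists (x :: nil) => i Hi; apply: Hc; by apply: Hi; left.
- move=> x y z Hz; apply: U.
  have -> : (fun i => f i z) = ((fun i => f i x) + (fun i => f i y))%R by apply: funext => i; rewrite Hz.
  exact: (@cvgD R R^o I G _ _ _ _ _ (Hg x) (Hg y)).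
- move=> x Hx; apply/RleP.
  apply: (@closed_cvg I R G _ (fun i => f i x) (fun r : R => (0 <= r)%R) _ _ (g x) (Hg x)).
    exact: closed_ge.
  by apply: nearW => i; apply/RleP.
- move=> x y Hxy; apply: U.
  have -> : (fun i => f i x) = (fun i => f i y) by apply: funext.
  exact: Hg.
Qed.

End UL.

Theorem lemma3p8 (L : signature) (U : structure L) (K : Type) (n m : nat)
  (A B : dom U -> Prop) (mu nu : form L (dom U) -> R) :
  monster U K -> small U K A -> small U K B -> (forall a, A a -> B a) ->
  is_measure U (xv n) (setT U) mu -> is_measure U (yv n m) (setT U) nu ->
  geE U n m A mu nu -> geE U n m B mu nu.
Proof.
  exact (lemma3p8_gen UL.ulim L U K n m A B mu nu).
Qed.
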